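(* Let $N,\mu,\beta,\sigma,\gamma,p>0$ and $0<\rho<1$ and consider the system $$S'=\mu N-\tfrac{\beta(1-\rho)}{N}SI-\tfrac{p}{N}S-\mu S,\qquad E'=\tfrac{\beta(1-\rho)}{N}SI-(\sigma+\mu)E,\qquad I'=\sigma E-(\gamma+\mu)I$$ on $\Omega=\{(S,E,I)\in\mathbb{R}_+^3: S+E+I\le N\}$. Let $\mathcal{R}_0=\dfrac{\mu N\sigma\beta(1-\rho)}{(\sigma+\mu)(\gamma+\mu)(p+\mu N)}$. If $\mathcal{R}_0>1$, then the disease-free equilibrium $\left(\frac{\mu N^2}{p+\mu N},0,0\right)$ is not an $\omega$-limit point of any orbit starting in the interior of $\Omega$.
   Context: $(S,E,I)$-subsystem of an SEIR model with vaccination rate $p$ and birth/death rate $\mu$. The $\omega$-limit set of a solution $x(\cdot)$ is $\{y:\exists t_n\to+\infty,\ x(t_n)\to y\}$. *)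

(* Defs.v *)
From Stdlib Require Import Reals.
From Coquelicot Require Import Coquelicot.
Open Scope R_scope.

Definition is_SEI_solution (N mu beta sigma gamma p rho : R)
  (S E I : R -> R) : Prop :=
  filterlim S (at_right 0) (locally (S 0)) /\
  filterlim E (at_right 0) (locally (E 0)) /\
  filterlim I (at_right 0) (locally (I 0)) /\
  forall t, 0 < t ->
    is_derive S t (mu * N - beta * (1 - rho) / N * S t * I t - p / N * S t - mu * S t) /\
    is_derive E t (beta * (1 - rho) / N * S t * I t - (sigma + mu) * E t) /\
    is_derive I t (sigma * E t - (gamma + mu) * I t).

Definition in_interior_Omega (N S E I : R) : Prop :=
  0 < S /\ 0 < E /\ 0 < I /\ S + E + I < N.

Definition omega_limit_point (S E I : R -> R) (y1 y2 y3 : R) : Prop :=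
  exists tn : nat -> R,
    is_lim_seq tn p_infty /\
    is_lim_seq (fun n => S (tn n)) y1 /\
    is_lim_seq (fun n => E (tn n)) y2 /\
    is_lim_seq (fun n => I (tn n)) y3.

Definition basic_repro_number (N mu beta sigma gamma p rho : R) : R :=
  mu * N * sigma * beta * (1 - rho) / ((sigma + mu) * (gamma + mu) * (p + mu * N)).

(* Main.v *)
Require Import Defs.
From Stdlib Require Import Reals Lra Lia.
From Coquelicot Require Import Coquelicot.
Open Scope R_scope.

Definition RC (f : R -> R) (a : R) := filterlim f (at_right a) (locally (f a)).

Lemma RC_of_cont f a : filterlim f (locally a) (locally (f a)) -> RC f a.
Proof. intro H. unfold RC. eapply filterlim_filter_le_1; [|exact H]. apply filter_le_within. Qed.

Lemma RC_of_derive f a l : is_derive f a l -> RC f a.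
Proof. intro H. apply RC_of_cont. apply (ex_derive_continuous f a). exists l; exact H. Qed.

Lemma RC_plus f g a : RC f a -> RC g a -> RC (fun t => f t + g t) a.
Proof.
  intros Hf Hg. unfold RC.
  eapply filterlim_comp_2; [exact Hf|exact Hg|].
  apply (filterlim_plus (V:=R_NormedModule)).
Qed.

Lemma RC_mult f g a : RC f a -> RC g a -> RC (fun t => f t * g t) a.
Proof.
  intros Hf Hg. unfold RC.
  eapply filterlim_comp_2; [exact Hf|exact Hg|].
  apply (filterlim_mult (K:=R_AbsRing)).
Qed.

Lemma RC_const c a : RC (fun _ => c) a.
Proof. unfold RC. apply filterlim_const. Qed.

Lemma RC_expl k a : RC (fun t => exp (k * t)) a.
Proof.
  apply (RC_of_derive _ _ (k * 1 * exp (k*a))).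
  apply (is_derive_comp exp (fun t => k * t) a (exp (k*a)) (k*1)).
  apply is_derive_exp. apply is_derive_scal. apply (is_derive_id (K:=R_AbsRing)).
Qed.

Lemma RC_eps f a : RC f a -> forall eps, 0 < eps -> exists d, 0 < d /\
  forall x, a < x < a + d -> Rabs (f x - f a) < eps.
Proof.
  intros H eps Heps.
  assert (Hl : locally (f a) (fun y => Rabs (y - f a) < eps)).
  { exists (mkposreal eps Heps). intros y Hy. exact Hy. }
  specialize (H _ Hl). destruct H as [d Hd].
  exists d. split. apply cond_pos. intros x Hx. apply Hd.
  unfold ball; simpl; unfold AbsRing_ball, abs, minus, plus, opp; simpl.
  rewrite Rabs_right; lra. lra.
Qed.

Lemma cont_eps f x l : is_derive f x l -> forall eps, 0 < eps -> exists d, 0 < d /\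
  forall y, Rabs (y - x) < d -> Rabs (f y - f x) < eps.
Proof.
  intros H eps Heps.
  assert (Hc : filterlim f (locally x) (locally (f x))).
  { apply (ex_derive_continuous f x). exists l; exact H. }
  assert (Hl : locally (f x) (fun y => Rabs (y - f x) < eps)).
  { exists (mkposreal eps Heps). intros y Hy. exact Hy. }
  specialize (Hc _ Hl). destruct Hc as [d Hd].
  exists d. split. apply cond_pos. intros y Hy. apply Hd. exact Hy.
Qed.

Lemma mono f df a b : a <= b -> RC f a ->
  (forall x, a < x <= b -> is_derive f x (df x)) ->
  (forall x, a < x <= b -> 0 <= df x) -> f a <= f b.
Proof.
  intros Hab Hrc Hd Hpos.
  destruct (Req_dec a b) as [<-|Hne]; [lra|].
  assert (Hx : forall x, a < x < b -> f x <= f b).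
  { intros x Hx.
    destruct (MVT_gen f x b df) as [c [Hc Heq]].
    - intros y Hy. rewrite Rmin_left in Hy by lra. rewrite Rmax_right in Hy by lra.
      apply Hd; lra.
    - intros y Hy. rewrite Rmin_left in Hy by lra. rewrite Rmax_right in Hy by lra.
      apply continuity_pt_filterlim. apply (ex_derive_continuous f y).
      exists (df y). apply Hd; lra.
    - rewrite Rmin_left in Hc by lra. rewrite Rmax_right in Hc by lra.
      assert (0 <= df c) by (apply Hpos; lra).
      assert (0 <= df c * (b - x)) by (apply Rmult_le_pos; lra). lra. }
  destruct (Rle_dec (f a) (f b)) as [|Hn]; [assumption|].
  exfalso.
  destruct (RC_eps f a Hrc (f a - f b)) as [d [Hd0 Hdd]]; [lra|].
  set (x := a + Rmin (d/2) ((b-a)/2)).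
  assert (Hm1 : 0 < Rmin (d/2) ((b-a)/2)) by (apply Rmin_pos; lra).
  assert (Hm2 : Rmin (d/2) ((b-a)/2) <= d/2) by apply Rmin_l.
  assert (Hm3 : Rmin (d/2) ((b-a)/2) <= (b-a)/2) by apply Rmin_r.
  specialize (Hdd x). specialize (Hx x).
  assert (a < x < a + d) by (unfold x; lra).
  assert (a < x < b) by (unfold x; lra).
  specialize (Hdd H). specialize (Hx H0).
  apply Rabs_def2 in Hdd. lra.
Qed.



Lemma deriv_w f c0 k t d : is_derive f t d ->
  is_derive (fun t => (f t + c0) * exp (k*t)) t ((d + k*(f t + c0)) * exp (k*t)).
Proof.
  intro H.
  assert (H1 : is_derive (fun t => f t + c0) t (d + 0)).
  { apply (is_derive_plus (K:=R_AbsRing) (V:=R_NormedModule)); [exact H|].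
    apply (is_derive_const (K:=R_AbsRing) (V:=R_NormedModule)). }
  assert (H2 : is_derive (fun t => exp (k*t)) t (k * 1 * exp (k*t))).
  { apply (is_derive_comp exp (fun t => k * t) t (exp (k*t)) (k*1)).
    apply is_derive_exp. apply is_derive_scal. apply (is_derive_id (K:=R_AbsRing)). }
  pose proof (is_derive_mult (K:=R_AbsRing) _ _ _ _ _ H1 H2 Rmult_comm) as H3.
  replace ((d + k*(f t + c0)) * exp (k*t)) with
    (plus (mult (d + 0) (exp (k*t))) (mult (f t + c0) (k * 1 * exp (k*t)))).
  exact H3.
  unfold plus, mult; simpl. ring.
Qed.

Lemma RC_w f c0 k a : RC f a -> RC (fun t => (f t + c0) * exp (k*t)) a.
Proof.
  intro H. apply RC_mult. apply RC_plus. exact H. apply RC_const. apply RC_expl.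
Qed.

Lemma real_ind (P : R -> Prop) :
  (forall m, 0 <= m -> (forall u, 0 <= u < m -> P u) -> P m) ->
  (forall m, 0 <= m -> P m -> exists d, 0 < d /\ forall u, m <= u < m + d -> P u) ->
  forall t, 0 <= t -> P t.
Proof.
  intros Hstep Hright b Hb.
  set (A := fun s => 0 <= s <= b /\ forall u, 0 <= u <= s -> P u).
  assert (HA0 : A 0).
  { split. lra. intros u Hu. replace u with 0 by lra. apply Hstep. lra. intros; lra. }
  assert (Hbd : bound A). { exists b. intros s Hs. apply Hs. }
  destruct (completeness A Hbd (ex_intro _ 0 HA0)) as [m [Hub Hlub]].
  assert (Hm0 : 0 <= m) by (apply Hub; exact HA0).
  assert (Hmb : m <= b) by (apply Hlub; intros s Hs; apply Hs).
  assert (Hlt : forall u, 0 <= u < m -> P u).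
  { intros u Hu.
    destruct (Classical_Prop.classic (exists s, A s /\ u <= s)) as [[s [Hs Hus]]|Hno].
    - apply Hs. lra.
    - exfalso. assert (m <= u). { apply Hlub. intros s Hs.
        destruct (Rle_dec s u); [auto|]. exfalso; apply Hno; exists s; split; auto; lra. }
      lra. }
  assert (HPm : P m) by (apply Hstep; auto).
  destruct (Hright m Hm0 HPm) as [d [Hd Hdu]].
  destruct (Req_dec m b) as [<-|Hne].
  - exact HPm.
  - exfalso.
    set (s := Rmin (m + d/2) b).
    assert (s <= m + d/2) by apply Rmin_l. assert (s <= b) by apply Rmin_r.
    assert (m < s). { unfold s. apply Rmin_glb_lt; lra. }
    assert (A s). { split. lra. intros u Hu.
      destruct (Rlt_le_dec u m). apply Hlt; lra.
      apply Hdu; lra. }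
    assert (s <= m) by (apply Hub; auto). lra.
Qed.

Lemma last_time (h : R -> R) t : 0 <= t ->
  (forall x, 0 < x -> exists l, is_derive h x l) ->
  (exists s, 0 <= s <= t /\ h s <= 0) ->
  exists tau, 0 <= tau <= t /\ h tau <= 0 /\ forall u, tau < u <= t -> 0 < h u.
Proof.
  intros Ht Hd [s0 [Hs0 Hhs0]].
  set (B := fun s => 0 <= s <= t /\ h s <= 0).
  assert (Hbd : bound B). { exists t. intros s Hs. apply Hs. }
  assert (HB : exists s, B s) by (exists s0; split; auto).
  destruct (completeness B Hbd HB) as [m [Hub Hlub]].
  assert (Hm0 : 0 <= m) by (apply Rle_trans with s0; [lra| apply Hub; split; auto]).
  assert (Hmt : m <= t) by (apply Hlub; intros s Hs; apply Hs).
  exists m. split. lra. split.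
  - destruct (Rle_dec (h m) 0) as [|Hn]; [auto|]. exfalso.
    destruct (Req_dec m 0) as [Hm|Hm].
    + assert (s0 <= m) by (apply Hub; split; auto). assert (s0 = 0) by lra.
      subst. lra.
    + destruct (Hd m) as [l Hl]; [lra|].
      destruct (cont_eps h m l Hl (h m)) as [d [Hd0 Hdd]]; [lra|].
      assert (Hno : ~ (forall s, B s -> s <= m - Rmin (d/2) (m/2))).
      { intro HH. assert (m <= m - Rmin (d/2) (m/2)) by (apply Hlub; exact HH).
        assert (0 < Rmin (d/2) (m/2)) by (apply Rmin_pos; lra). lra. }
      apply Hno. intros s Hs. destruct (Rle_dec s (m - Rmin (d/2) (m/2))) as [|Hs2]; [auto|].
      exfalso. assert (s <= m) by (apply Hub; auto).
      assert (Rmin (d/2) (m/2) <= d/2) by apply Rmin_l.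
      specialize (Hdd s). assert (Rabs (s - m) < d) by (apply Rabs_def1; lra).
      specialize (Hdd H1). apply Rabs_def2 in Hdd. destruct Hs. lra.
  - intros u Hu. destruct (Rlt_le_dec 0 (h u)) as [|Hle]; [auto|].
    assert (u <= m) by (apply Hub; split; auto; lra). lra.
Qed.

Lemma left_nonneg f m l : 0 < m -> is_derive f m l ->
  (forall u, 0 <= u < m -> 0 < f u) -> 0 <= f m.
Proof.
  intros Hm Hd Hp. destruct (Rle_dec 0 (f m)) as [|Hn]; [auto|]. exfalso.
  destruct (cont_eps f m l Hd (- f m)) as [d [Hd0 Hdd]]; [lra|].
  set (u := m - Rmin (d/2) (m/2)).
  assert (0 < Rmin (d/2) (m/2)) by (apply Rmin_pos; lra).
  assert (Rmin (d/2) (m/2) <= d/2) by apply Rmin_l.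
  assert (Rmin (d/2) (m/2) <= m/2) by apply Rmin_r.
  assert (Rabs (u - m) < d) by (apply Rabs_def1; unfold u; lra).
  specialize (Hdd u H2). apply Rabs_def2 in Hdd.
  assert (0 < f u) by (apply Hp; unfold u; lra). lra.
Qed.

Lemma local_decr f m l : 0 < m -> is_derive f m l -> 0 < l ->
  exists u, 0 <= u < m /\ f u < f m.
Proof.
  intros Hm Hd Hl. apply is_derive_Reals in Hd.
  destruct (Hd (l/2)) as [d Hdd]; [lra|].
  set (h := - Rmin (d/2) (m/2)).
  assert (0 < Rmin (d/2) (m/2)) by (apply Rmin_pos; [pose proof (cond_pos d)|]; lra).
  assert (Rmin (d/2) (m/2) <= d/2) by apply Rmin_l.
  assert (Rmin (d/2) (m/2) <= m/2) by apply Rmin_r.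
  pose proof (cond_pos d).
  assert (Hh0 : h <> 0) by (unfold h; lra).
  assert (Hhd : Rabs h < d) by (apply Rabs_def1; unfold h; lra).
  specialize (Hdd h Hh0 Hhd). apply Rabs_def2 in Hdd.
  exists (m + h). split. unfold h; lra.
  assert (Hq : (f (m + h) - f m) / h > 0) by lra.
  destruct (Rlt_le_dec (f (m+h)) (f m)) as [|Hc]; [auto|]. exfalso.
  assert (Hneg : (f (m + h) - f m) / h <= 0).
  { unfold Rdiv. apply Rmult_le_0_l. lra.
    apply Rlt_le. apply Rinv_lt_0_compat. unfold h; lra. }
  lra.
Qed.

Lemma right_pos f m : RC f m -> 0 < f m ->
  exists d, 0 < d /\ forall u, m <= u < m + d -> 0 < f u.
Proof.
  intros H Hp. destruct (RC_eps f m H (f m) Hp) as [d [Hd Hdd]].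
  exists d. split; auto. intros u Hu.
  destruct (Req_dec u m) as [->|Hne]; auto.
  specialize (Hdd u). assert (m < u < m + d) by lra. specialize (Hdd H0).
  apply Rabs_def2 in Hdd. lra.
Qed.

Lemma deriv_lin f g t df dg al be : is_derive f t df -> is_derive g t dg ->
  is_derive (fun t => al * f t + be * g t) t (al * df + be * dg).
Proof.
  intros Hf Hg.
  apply (is_derive_plus (K:=R_AbsRing) (V:=R_NormedModule) (fun t => al * f t) (fun t => be * g t)).
  apply is_derive_scal; auto. apply is_derive_scal; auto.
Qed.

Lemma sol_RC N mu beta sigma gamma p rho S E I :
  is_SEI_solution N mu beta sigma gamma p rho S E I ->
  forall a, 0 <= a -> RC S a /\ RC E a /\ RC I a.
Proof.
  intros [HS [HE [HI Hd]]] a Ha.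
  destruct (Req_dec a 0) as [->|Hne]. { split; [|split]; assumption. }
  destruct (Hd a) as [H1 [H2 H3]]; [lra|].
  split; [|split]; eapply RC_of_derive; eassumption.
Qed.

Lemma positivity N mu beta sigma gamma p rho S E I :
 0<N -> 0<mu -> 0<beta -> 0<sigma -> 0<gamma -> 0<p -> rho<1 ->
 is_SEI_solution N mu beta sigma gamma p rho S E I -> 0 < S 0 -> 0 < E 0 -> 0 < I 0 ->
 forall t, 0 <= t -> 0 < S t /\ 0 < E t /\ 0 < I t.
Proof.
  intros hN hmu hbeta hsigma hgamma hp hrho1 hsol hS0 hE0 hI0.
  pose proof (sol_RC _ _ _ _ _ _ _ _ _ _ hsol) as hRC.
  destruct hsol as [_ [_ [_ hd]]].
  assert (ha1 : 0 < beta * (1 - rho) / N).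
  { apply Rdiv_lt_0_compat; [apply Rmult_lt_0_compat|]; lra. }
  apply real_ind.
  - intros m Hm Hlt.
    destruct (Req_dec m 0) as [->|Hne]. { auto. }
    assert (Hm0 : 0 < m) by lra.
    destruct (hd m Hm0) as [dS [dE dI]].
    assert (Snn : 0 <= S m) by (eapply left_nonneg; [exact Hm0|exact dS|]; intros u Hu; apply Hlt; auto).
    assert (Enn : 0 <= E m) by (eapply left_nonneg; [exact Hm0|exact dE|]; intros u Hu; apply Hlt; auto).
    assert (Inn : 0 <= I m) by (eapply left_nonneg; [exact Hm0|exact dI|]; intros u Hu; apply Hlt; auto).
    assert (Hnn : forall x, 0 < x <= m -> 0 <= S x /\ 0 <= E x /\ 0 <= I x).
    { intros x Hx. destruct (Req_dec x m) as [->|]; [auto|].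
      destruct (Hlt x) as [? [? ?]]; [lra|]. split; [|split]; lra. }
    split; [|split].
    + destruct (Req_dec (S m) 0) as [Hz|Hz]; [|lra]. exfalso.
      destruct (local_decr S m _ Hm0 dS) as [u [Hu Hfu]].
      { rewrite Hz. replace (mu * N - beta * (1 - rho) / N * 0 * I m - p / N * 0 - mu * 0) with (mu*N) by ring.
        apply Rmult_lt_0_compat; lra. }
      destruct (Hlt u Hu) as [? _]. lra.
    + pose proof (mono (fun t => (E t + 0) * exp ((sigma+mu)*t))
        (fun x => ((beta * (1 - rho) / N * S x * I x - (sigma + mu) * E x) + (sigma+mu)*(E x + 0)) * exp ((sigma+mu)*x))
        0 m ltac:(lra)) as HM.
      assert (HRC : RC (fun t => (E t + 0) * exp ((sigma+mu)*t)) 0).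
      { apply RC_w. apply hRC; lra. }
      specialize (HM HRC).
      assert (HM2 : (E 0 + 0) * exp ((sigma + mu) * 0) <= (E m + 0) * exp ((sigma + mu) * m)).
      { apply HM.
        - intros x Hx. apply deriv_w. apply hd; lra.
        - intros x Hx. destruct (Hnn x Hx) as [? [? ?]]. apply Rmult_le_pos.
          2: apply Rlt_le, exp_pos.
          replace (beta * (1 - rho) / N * S x * I x - (sigma + mu) * E x + (sigma + mu) * (E x + 0))
            with (beta * (1 - rho) / N * S x * I x) by ring.
          apply Rmult_le_pos; [apply Rmult_le_pos|]; lra. }
      rewrite Rmult_0_r, exp_0 in HM2.
      pose proof (exp_pos ((sigma + mu) * m)).
      destruct (Req_dec (E m) 0) as [Hz|]; [|lra].
      rewrite Hz in HM2. lra.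
    + pose proof (mono (fun t => (I t + 0) * exp ((gamma+mu)*t))
        (fun x => ((sigma * E x - (gamma + mu) * I x) + (gamma+mu)*(I x + 0)) * exp ((gamma+mu)*x))
        0 m ltac:(lra)) as HM.
      assert (HRC : RC (fun t => (I t + 0) * exp ((gamma+mu)*t)) 0).
      { apply RC_w. apply hRC; lra. }
      specialize (HM HRC).
      assert (HM2 : (I 0 + 0) * exp ((gamma + mu) * 0) <= (I m + 0) * exp ((gamma + mu) * m)).
      { apply HM.
        - intros x Hx. apply deriv_w. apply hd; lra.
        - intros x Hx. destruct (Hnn x Hx) as [? [? ?]]. apply Rmult_le_pos.
          2: apply Rlt_le, exp_pos.
          replace (sigma * E x - (gamma + mu) * I x + (gamma + mu) * (I x + 0))
            with (sigma * E x) by ring.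
          apply Rmult_le_pos; lra. }
      rewrite Rmult_0_r, exp_0 in HM2.
      pose proof (exp_pos ((gamma + mu) * m)).
      destruct (Req_dec (I m) 0) as [Hz|]; [|lra].
      rewrite Hz in HM2. lra.
  - intros m Hm [PS [PE PI]].
    destruct (hRC m Hm) as [RS [RE RI]].
    destruct (right_pos S m RS PS) as [d1 [Hd1 H1]].
    destruct (right_pos E m RE PE) as [d2 [Hd2 H2]].
    destruct (right_pos I m RI PI) as [d3 [Hd3 H3]].
    exists (Rmin d1 (Rmin d2 d3)). split.
    apply Rmin_pos; auto. apply Rmin_pos; auto.
    intros u Hu.
    assert (Rmin d1 (Rmin d2 d3) <= d1) by apply Rmin_l.
    assert (Rmin d1 (Rmin d2 d3) <= Rmin d2 d3) by apply Rmin_r.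
    assert (Rmin d2 d3 <= d2) by apply Rmin_l.
    assert (Rmin d2 d3 <= d3) by apply Rmin_r.
    split; [apply H1|split; [apply H2|apply H3]]; lra.
Qed.

Lemma exp_le x y : x <= y -> exp x <= exp y.
Proof. intro H. destruct (Rle_lt_or_eq_dec _ _ H) as [h|<-]. left; apply exp_increasing; auto. lra. Qed.

Lemma persist N mu beta sigma gamma p rho S E I :
 0<N -> 0<mu -> 0<beta -> 0<sigma -> 0<gamma -> 0<p -> rho<1 ->
 basic_repro_number N mu beta sigma gamma p rho > 1 ->
 is_SEI_solution N mu beta sigma gamma p rho S E I -> 0 < S 0 -> 0 < E 0 -> 0 < I 0 ->
 exists eps, 0 < eps /\ forall t, 0 <= t -> eps <= sigma * E t + (sigma + mu) * I t.
Proof.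
  intros hN hmu hbeta hsigma hgamma hp hrho1 hR0 hsol hS0 hE0 hI0.
  pose proof (positivity _ _ _ _ _ _ _ _ _ _ hN hmu hbeta hsigma hgamma hp hrho1 hsol hS0 hE0 hI0) as hpos.
  pose proof (sol_RC _ _ _ _ _ _ _ _ _ _ hsol) as hRC.
  destruct hsol as [_ [_ [_ hd]]].
  set (a1 := beta * (1 - rho) / N) in *.
  assert (ha1 : 0 < a1) by (unfold a1; apply Rdiv_lt_0_compat; [apply Rmult_lt_0_compat|]; lra).
  set (k := p / N + mu).
  assert (hk : 0 < k) by (unfold k; assert (0 < p / N) by (apply Rdiv_lt_0_compat; lra); lra).
  set (b := (sigma + mu) * (gamma + mu)).
  assert (hb : 0 < b) by (unfold b; apply Rmult_lt_0_compat; lra).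
  set (c := b / (sigma * a1)).
  assert (hc : 0 < c) by (unfold c; apply Rdiv_lt_0_compat; [|apply Rmult_lt_0_compat]; lra).
  assert (hac : sigma * a1 * c = b) by (unfold c; field; split; lra).
  assert (hck : c * k < mu * N).
  { unfold basic_repro_number in hR0.
    assert (hD : 0 < (sigma + mu) * (gamma + mu) * (p + mu * N)).
    { apply Rmult_lt_0_compat; [apply Rmult_lt_0_compat|]; nra. }
    apply Rlt_gt in hR0. 
    assert (H1 : (sigma + mu) * (gamma + mu) * (p + mu * N) < mu * N * sigma * beta * (1 - rho)).
    { set (D := (sigma + mu) * (gamma + mu) * (p + mu * N)) in *.
      set (X := mu * N * sigma * beta * (1 - rho)) in *.
      assert (X / D * D = X) by (field; lra). nra. }
    unfold c, k, b, a1.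
    replace ((sigma + mu) * (gamma + mu) / (sigma * (beta * (1 - rho) / N)) * (p / N + mu))
      with ((sigma + mu) * (gamma + mu) * (p + mu * N) / (sigma * beta * (1 - rho))) by (field; lra).
    apply (Rmult_lt_reg_r (sigma * beta * (1 - rho))).
    apply Rmult_lt_0_compat; [apply Rmult_lt_0_compat|]; lra.
    unfold Rdiv. rewrite Rmult_assoc, Rinv_l. lra.
    apply Rgt_not_eq. apply Rmult_lt_0_compat; [apply Rmult_lt_0_compat|]; lra. }
  set (dl := (mu * N / c - k) / (2 * a1)).
  assert (hdl : 0 < dl).
  { unfold dl. apply Rdiv_lt_0_compat; [|lra].
    assert (k < mu * N / c). { apply (Rmult_lt_reg_r c); auto. unfold Rdiv. rewrite Rmult_assoc, Rinv_l; lra. }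
    lra. }
  set (k2 := a1 * dl + k).
  assert (hk2 : k2 = (mu * N / c + k) / 2) by (unfold k2, dl; field; lra).
  assert (hk2p : 0 < k2) by (unfold k2; nra).
  set (Ss := mu * N / k2).
  assert (hSs : k2 * Ss = mu * N) by (unfold Ss; field; lra).
  assert (hSsc : c < Ss).
  { apply (Rmult_lt_reg_l k2); auto. rewrite hSs. rewrite hk2.
    assert (c * (mu * N / c) = mu * N) by (field; lra). nra. }
  set (T := Ss / ((Ss - c) * k2)).
  assert (hT : 0 < T) by (unfold T; apply Rdiv_lt_0_compat; [lra|apply Rmult_lt_0_compat; lra]).
  assert (hk2T : (Ss - c) * (k2 * T) = Ss) by (unfold T; field; split; lra).
  set (K := gamma + mu).
  assert (hK : 0 < K) by (unfold K; lra).
  set (V := fun t => sigma * E t + (sigma + mu) * I t).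
  assert (hV0 : 0 < V 0) by (unfold V; nra).
  set (eps := exp (- (K * T)) * Rmin ((sigma + mu) * dl) (V 0 / 2)).
  assert (hm1 : Rmin ((sigma + mu) * dl) (V 0 / 2) <= (sigma + mu) * dl) by apply Rmin_l.
  assert (hm2 : Rmin ((sigma + mu) * dl) (V 0 / 2) <= V 0 / 2) by apply Rmin_r.
  assert (hm0 : 0 < Rmin ((sigma + mu) * dl) (V 0 / 2)) by (apply Rmin_pos; nra).
  assert (heKT : exp (K * T) * exp (- (K * T)) = 1) by (rewrite <- exp_plus; replace (K * T + - (K * T)) with 0 by ring; apply exp_0).
  assert (hepsKT : eps * exp (K * T) = Rmin ((sigma + mu) * dl) (V 0 / 2)).
  { unfold eps. rewrite Rmult_comm, <- Rmult_assoc, heKT. ring. }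
  assert (heps : 0 < eps) by (unfold eps; apply Rmult_lt_0_compat; [apply exp_pos|auto]).
  exists eps. split; [exact heps|].
  intros t Ht. destruct (Rle_dec eps (V t)) as [|Hlt]; [auto|]. exfalso.
  apply Rnot_le_lt in Hlt.
  assert (hdV : forall x, 0 < x -> is_derive V x (I x * (sigma * a1 * S x - b))).
  { intros x Hx. destruct (hd x Hx) as [_ [dE dI]].
    pose proof (deriv_lin _ _ _ _ _ sigma (sigma + mu) dE dI) as H.
    eapply is_derive_ext; [|eapply (is_derive_ext _ _ _ _ (fun t => eq_refl))].
    2: { replace (I x * (sigma * a1 * S x - b)) with
           (sigma * (a1 * S x * I x - (sigma + mu) * E x) + (sigma + mu) * (sigma * E x - (gamma + mu) * I x))
           by (unfold b; ring). exact H. }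
    intro; reflexivity. }
  assert (hRCV : forall a, 0 <= a -> RC V a).
  { intros a Ha. destruct (hRC a Ha) as [_ [RE RI]]. unfold V.
    apply RC_plus; apply RC_mult; auto; apply RC_const. }
  assert (hW : forall u v, 0 <= u <= v -> V u <= V v * exp (K * (v - u))).
  { intros u v Huv.
    assert (HM : (V u + 0) * exp (K * u) <= (V v + 0) * exp (K * v)).
    { apply (mono (fun t => (V t + 0) * exp (K * t))
        (fun x => (I x * (sigma * a1 * S x - b) + K * (V x + 0)) * exp (K * x))); [lra| | |].
      - apply RC_w. apply hRCV; lra.
      - intros x Hx. apply deriv_w. apply hdV. lra.
      - intros x Hx. apply Rmult_le_pos; [|apply Rlt_le, exp_pos].
        destruct (hpos x) as [? [? ?]]; [lra|].
        replace (I x * (sigma * a1 * S x - b) + K * (V x + 0))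
          with (sigma * a1 * S x * I x + K * sigma * E x) by (unfold V, K, b; ring).
        assert (0 < sigma * a1 * S x * I x) by (apply Rmult_lt_0_compat; [apply Rmult_lt_0_compat; [apply Rmult_lt_0_compat|]|]; auto).
        assert (0 < K * sigma * E x) by (apply Rmult_lt_0_compat; [apply Rmult_lt_0_compat|]; auto). lra. }
    rewrite !Rplus_0_r in HM.
    replace (K * v) with (K * u + K * (v - u)) in HM by ring.
    rewrite exp_plus in HM.
    apply (Rmult_le_reg_r (exp (K * u))). apply exp_pos. nra. }
  assert (hdh : forall x, 0 < x -> exists l, is_derive (fun y => S y + - c) x l).
  { intros x Hx. destruct (hd x Hx) as [dS _]. eexists.
    apply (is_derive_plus (K:=R_AbsRing) (V:=R_NormedModule)); [exact dS|].
    apply (is_derive_const (K:=R_AbsRing) (V:=R_NormedModule)). }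
  assert (hVmono : forall u, 0 <= u <= t -> (forall x, u < x <= t -> c < S x) -> V u <= V t).
  { intros u Hu Hx.
    apply (mono V (fun x => I x * (sigma * a1 * S x - b))); [lra|apply hRCV; lra| |].
    - intros x Hx'. apply hdV; lra.
    - intros x Hx'. destruct (hpos x) as [? [? ?]]; [lra|]. specialize (Hx x Hx').
      apply Rmult_le_pos; [lra|]. rewrite <- hac.
      assert (sigma * a1 * c <= sigma * a1 * S x).
      { apply Rmult_le_compat_l; [apply Rlt_le, Rmult_lt_0_compat|]; lra. } lra. }
  assert (hexpKT : exp (- (K * T)) <= 1).
  { rewrite <- exp_0. apply exp_le. nra. }
  destruct (Classical_Prop.classic (exists s, 0 <= s <= t /\ S s + - c <= 0)) as [Hex|Hno].
  2: { assert (V 0 <= V t).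
       { apply hVmono. lra. intros x Hx. destruct (Rlt_le_dec c (S x)); auto.
         exfalso. apply Hno. exists x. split; lra. }
       assert (eps <= V 0 / 2).
       { unfold eps. assert (0 <= Rmin ((sigma + mu) * dl) (V 0 / 2)) by lra.
         apply Rle_trans with (1 * Rmin ((sigma + mu) * dl) (V 0 / 2)). 
         apply Rmult_le_compat_r; auto. lra. }
       lra. }
  destruct (last_time (fun y => S y + - c) t Ht hdh Hex) as [tau [Htau [Hstau Haft]]].
  simpl in Hstau, Haft.
  assert (HVtau : V tau <= V t).
  { apply hVmono. lra. intros x Hx. specialize (Haft x Hx). lra. }
  destruct (Rlt_le_dec tau T) as [HtT|HtT].
  - pose proof (hW 0 tau ltac:(lra)) as H0.
    assert (exp (K * (tau - 0)) <= exp (K * T)) by (apply exp_le; nra).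
    assert (0 <= V tau) by (unfold V; destruct (hpos tau) as [? [? ?]]; [lra|]; nra).
    assert (V 0 <= eps * exp (K * T)).
    { apply Rle_trans with (V tau * exp (K * (tau - 0))); auto.
      assert (0 < exp (K * T)) by apply exp_pos.
      assert (0 <= exp (K * (tau - 0))) by (apply Rlt_le, exp_pos).
      nra. }
    lra.
  - set (u0 := tau - T).
    assert (hI : forall u, u0 <= u <= tau -> I u <= dl).
    { intros u Hu. pose proof (hW u tau ltac:(unfold u0 in *; lra)) as H0.
      assert (exp (K * (tau - u)) <= exp (K * T)) by (apply exp_le; unfold u0 in *; nra).
      destruct (hpos tau) as [? [? ?]]; [lra|]. destruct (hpos u) as [? [? ?]]; [unfold u0 in *; lra|].
      assert (0 <= V tau) by (unfold V; nra).
      assert (HVu : V u <= (sigma + mu) * dl).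
      { apply Rle_trans with (V tau * exp (K * (tau - u))); auto.
        assert (0 < exp (K * T)) by apply exp_pos.
        assert (V tau * exp (K * (tau - u)) <= V tau * exp (K * T)) by (apply Rmult_le_compat_l; auto).
        assert (V tau * exp (K * T) <= eps * exp (K * T)) by (apply Rmult_le_compat_r; lra).
        lra. }
      unfold V in HVu. nra. }
    assert (HM : (S u0 + - Ss) * exp (k2 * u0) <= (S tau + - Ss) * exp (k2 * tau)).
    { apply (mono (fun t => (S t + - Ss) * exp (k2 * t))
        (fun x => ((mu * N - a1 * S x * I x - p / N * S x - mu * S x) + k2 * (S x + - Ss)) * exp (k2 * x)));
        [unfold u0; lra| | |].
      - apply RC_w. apply hRC; unfold u0; lra.
      - intros x Hx. apply deriv_w. apply hd. unfold u0 in *; lra.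
      - intros x Hx. apply Rmult_le_pos; [|apply Rlt_le, exp_pos].
        destruct (hpos x) as [? [? ?]]; [unfold u0 in *; lra|].
        specialize (hI x ltac:(lra)).
        replace (mu * N - a1 * S x * I x - p / N * S x - mu * S x + k2 * (S x + - Ss))
          with (a1 * S x * (dl - I x) + (mu * N - k2 * Ss)) by (unfold k2, k; ring).
        rewrite hSs. replace (mu * N - mu * N) with 0 by ring.
        assert (0 <= a1 * S x * (dl - I x)) by (apply Rmult_le_pos; [apply Rmult_le_pos|]; lra).
        lra. }
    replace (k2 * tau) with (k2 * u0 + k2 * T) in HM by (unfold u0; ring).
    rewrite exp_plus in HM.
    assert (H1 : S u0 + - Ss <= (S tau + - Ss) * exp (k2 * T)).
    { apply (Rmult_le_reg_r (exp (k2 * u0))). apply exp_pos. nra. }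
    pose proof (exp_ineq1_le (k2 * T)).
    assert (H2 : (S tau + - Ss) * exp (k2 * T) <= (c - Ss) * (1 + k2 * T)).
    { assert (0 <= exp (k2*T)) by (apply Rlt_le, exp_pos). nra. }
    destruct (hpos u0) as [? _]; [unfold u0; lra|].
    nra.
Qed.

Theorem mainTheorem9 (N mu beta sigma gamma p rho : R)
  (hN : 0 < N) (hmu : 0 < mu) (hbeta : 0 < beta) (hsigma : 0 < sigma)
  (hgamma : 0 < gamma) (hp : 0 < p) (hrho0 : 0 < rho) (hrho1 : rho < 1)
  (hR0 : basic_repro_number N mu beta sigma gamma p rho > 1)
  (S E I : R -> R)
  (hsol : is_SEI_solution N mu beta sigma gamma p rho S E I)
  (hinit : in_interior_Omega N (S 0) (E 0) (I 0)) :
  ~ omega_limit_point S E I (mu * N ^ 2 / (p + mu * N)) 0 0.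
Proof.
  destruct hinit as [hS0 [hE0 [hI0 _]]].
  destruct (persist N mu beta sigma gamma p rho S E I hN hmu hbeta hsigma hgamma hp hrho1 hR0 hsol hS0 hE0 hI0)
    as [eps [heps Hp]].
  intros [tn [Ht [_ [HE HI]]]].
  assert (HV : is_lim_seq (fun n => sigma * E (tn n) + (sigma + mu) * I (tn n)) (sigma * 0 + (sigma + mu) * 0)).
  { apply is_lim_seq_plus'; apply (is_lim_seq_scal_l _ _ (Finite 0)); assumption. }
  replace (sigma * 0 + (sigma + mu) * 0) with 0 in HV by ring.
  apply is_lim_seq_spec in HV. apply is_lim_seq_spec in Ht.
  destruct (HV (mkposreal eps heps)) as [N1 HN1].
  destruct (Ht 0) as [N2 HN2].
  set (n := (N1 + N2)%nat).
  specialize (HN1 n ltac:(unfold n; lia)). specialize (HN2 n ltac:(unfold n; lia)).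
  simpl in HN1. apply Rabs_def2 in HN1.
  specialize (Hp (tn n) ltac:(lra)). lra.
Qed.
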